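(* Let $(\mathcal A,\phi)$ be a noncommutative probability space and let $B,C\subseteq\mathcal A$ have the cluster property. Then for all $j>0$, $k>0$, $b_1,\dots,b_j\in B$ and $c_1,\dots,c_k\in C$, $$\kappa_{j+k}[b_1,\dots,b_j,c_1,\dots,c_k]=0.$$
   Context: A noncommutative probability space is a pair $(\mathcal A,\phi)$ with $\mathcal A$ a unital algebra over $\mathbb{C}$ and $\phi$ a linear form on $\mathcal A$ with $\phi(1)=1$. Two subsets $B,C\subseteq\mathcal A$ have the cluster property if $\phi(b_1\cdots b_jc_1\cdots c_k)=\phi(b_1\cdots b_j)\,\phi(c_1\cdots c_k)$ for all $b_1,\dots,b_j\in B$ and $c_1,\dots,c_k\in C$. A reduced plane tree is a rooted plane tree in which every internal node has at least two children; its weight is its number of leaves minus 1, and $i(t)$ is its number of internal nodes. It is prime if it has at least two leaves and the rightmost child of its root is a leaf; $\mathrm{PST}_n$ is the set of prime reduced plane trees of weight $n$. For $t$ with leaves $\ell_1,\dots,\ell_{n+1}$ from left to right, an internal vertex $v$ has a clear view to the $i$th sector ($1\le i\le n$), written $v\measuredangle i$, iff $v$ is the lowest common ancestor of $\ell_i$ and $\ell_{i+1}$. For $a_1,\dots,a_n\in\mathcal A$, $$\kappa_n[a_1,\dots,a_n]=\sum_{t\in\mathrm{PST}_n}(-1)^{i(t)-1}\prod_{v\text{ internal vertex of }t}\phi\Big(\prod_{v\measuredangle i}a_i\Big),$$ where the inner product is taken in increasing order of $i$. *)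

(* Defs.v *)
From HB Require Import structures.
From mathcomp Require Import all_boot all_order all_algebra.
From mathcomp Require Import reals complex.
Set Implicit Arguments. Unset Strict Implicit. Unset Printing Implicit Defensive.
Import Order.TTheory GRing.Theory Num.Theory.
Local Open Scope ring_scope.

Inductive ptree : Type := PLeaf | PNode of seq ptree.

(** Vertices are addressed by the path (sequence of child indices, 0-based)
    from the root.  [leaf_addrs t] lists the leaves from left to right. *)
Fixpoint leaf_addrs (t : ptree) : seq (seq nat) :=
  match t with
  | PLeaf => [:: [::]]
  | PNode cs =>
      (fix go (i : nat) (cs : seq ptree) : seq (seq nat) :=
         match cs with
         | [::] => [::]
         | c :: cs' => [seq i :: a | a <- leaf_addrs c] ++ go i.+1 cs'
         end) 0%N cs
  end.

Fixpoint internal_addrs (t : ptree) : seq (seq nat) :=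
  match t with
  | PLeaf => [::]
  | PNode cs =>
      [::] :: (fix go (i : nat) (cs : seq ptree) : seq (seq nat) :=
         match cs with
         | [::] => [::]
         | c :: cs' => [seq i :: a | a <- internal_addrs c] ++ go i.+1 cs'
         end) 0%N cs
  end.

Fixpoint reduced (t : ptree) : bool :=
  match t with
  | PLeaf => true
  | PNode cs =>
      (2 <= size cs)%N &&
      (fix go (cs : seq ptree) : bool :=
         match cs with [::] => true | c :: cs' => reduced c && go cs' end) cs
  end.

Definition nleaves (t : ptree) : nat := size (leaf_addrs t).
Definition weight (t : ptree) : nat := (nleaves t).-1.
Definition ninternal (t : ptree) : nat := size (internal_addrs t).

Definition prime_tree (t : ptree) : bool :=
  (2 <= nleaves t)%N &&
  match t with
  | PLeaf => false
  | PNode cs => if last PLeaf cs is PLeaf then true else false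
  end.

(** Lowest common ancestor of two vertices given by their addresses:
    the longest common prefix. *)
Fixpoint lcp (s1 s2 : seq nat) : seq nat :=
  match s1, s2 with
  | x :: s1', y :: s2' => if x == y then x :: lcp s1' s2' else [::]
  | _, _ => [::]
  end.

(** The i-th leaf (1-based), l_i. *)
Definition leaf_at (t : ptree) (i : nat) : seq nat := nth [::] (leaf_addrs t) i.-1.

Definition clear_view (t : ptree) (v : seq nat) (i : nat) : bool :=
  v == lcp (leaf_at t i) (leaf_at t i.+1).

(** Enumeration of reduced plane trees by number of leaves.
    [forests tab fuel s]: sequences of trees with total leaf count s, the
    trees with k leaves being taken from [nth [::] tab k]. *)
Fixpoint forests (tab : seq (seq ptree)) (fuel s : nat) : seq (seq ptree) :=
  match fuel with
  | 0 => if s == 0%N then [:: [::]] else [::]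
  | f.+1 =>
      if s == 0%N then [:: [::]] else
      flatten [seq [seq t :: r | t <- nth [::] tab k, r <- forests tab f (s - k)]
              | k <- iota 1 s]
  end.

(** [rpt_table m] : entry i (i <= m) is the list of reduced plane trees
    with exactly i leaves. *)
Fixpoint rpt_table (m : nat) : seq (seq ptree) :=
  match m with
  | 0 => [:: [::]]
  | m'.+1 =>
      let tab := rpt_table m' in
      rcons tab (if m'.+1 == 1%N then [:: PLeaf]
                 else [seq PNode cs | cs <- forests tab m'.+1 m'.+1 & (2 <= size cs)%N])
  end.

Definition rpt (m : nat) : seq ptree := nth [::] (rpt_table m) m.

Definition PST (n : nat) : seq ptree :=
  [seq t <- rpt n.+1 | reduced t && (weight t == n) && prime_tree t].

(** The cumulant kappa_n[a_1,...,a_n], with n = size a and a_i = a`_(i-1). *)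
Definition kappa (K : comNzRingType) (A : algType K) (phi : A -> K) (a : seq A) : K :=
  let n := size a in
  \sum_(t <- PST n)
     (-1) ^+ (ninternal t).-1 *
     \prod_(v <- internal_addrs t)
        phi (\prod_(i <- iota 1 n | clear_view t v i) a`_i.-1).

Definition cluster (K : comNzRingType) (A : algType K) (phi : A -> K)
  (B C : pred A) : Prop :=
  forall bs cs : seq A, all [in B] bs -> all [in C] cs ->
    phi ((\prod_(b <- bs) b) * (\prod_(c <- cs) c)) =
    phi (\prod_(b <- bs) b) * phi (\prod_(c <- cs) c).

(* Main.v *)
Require Import Defs.
From HB Require Import structures.
From mathcomp Require Import all_boot all_order all_algebra.
From mathcomp Require Import reals complex.
From mathcomp Require Import ring lra zify.
Set Implicit Arguments. Unset Strict Implicit. Unset Printing Implicit Defensive.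
Import GRing.Theory.
Local Open Scope ring_scope.

Section Alg.
Variable K : comNzRingType.
Variable A : nzRingType.
Variable phi : A -> K.
Variable F : seq A -> K.

Fixpoint Mp (p : A) (u w : seq A) : K :=
  match w with
  | [::] => phi p * F u
  | x :: w' => Mp p (rcons u x) w' + F u * Mp (p * x) [::] w'
  end.

Fixpoint Lp (p : A) (u w : seq A) : K :=
  match w with
  | [::] => if u is [::] then phi p else 0
  | x :: w' => Lp p (rcons u x) w' + F u * Lp (p * x) [::] w'
  end.

Lemma iota1S n : iota 1 n = map S (iota 0 n).
Proof. by rewrite -[1%N]/(1 + 0)%N iotaDl. Qed.

Lemma Mp_unroll p u w : Mp p u w = phi p * F (u ++ w) +
  \sum_(j <- iota 0 (size w)) F (u ++ take j w) * Mp (p * w`_j) [::] (drop j.+1 w).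
Proof.
elim: w p u => [|x w IH] p u /=; first by rewrite cats0 big_nil addr0.
rewrite IH big_cons iota1S big_map take0 cats0 drop0 /= -addrA; congr (_ + _).
  by rewrite cat_rcons.
rewrite addrC; congr (_ + _); apply: eq_bigr => j _.
by rewrite cat_rcons.
Qed.

Lemma Lp_unroll p u w : Lp p u w = (if u ++ w is [::] then phi p else 0) +
  \sum_(j <- iota 0 (size w)) F (u ++ take j w) * Lp (p * w`_j) [::] (drop j.+1 w).
Proof.
elim: w p u => [|x w IH] p u /=; first by rewrite cats0 big_nil addr0.
rewrite IH big_cons iota1S big_map take0 cats0 drop0 /= -addrA.
have -> : (if rcons u x ++ w is [::] then phi p else 0) = 0 by case: u.
have -> : (if u ++ x :: w is [::] then phi p else 0) = 0 by case: u.
rewrite !add0r addrC; congr (_ + _); apply: eq_bigr => j _.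
by rewrite cat_rcons.
Qed.

Variables inB inC : pred A.
Hypothesis hcl : forall bs cs, all inB bs -> all inC cs ->
  phi ((\prod_(b <- bs) b) * (\prod_(c <- cs) c)) =
  phi (\prod_(b <- bs) b) * phi (\prod_(c <- cs) c).
Hypothesis phi1 : phi 1 = 1.

Lemma Mp_C bs g : all inB bs -> all inC g -> forall cs u, all inC cs ->
  Mp ((\prod_(b <- bs) b) * (\prod_(c <- cs) c)) u g =
  phi (\prod_(b <- bs) b) * Mp (\prod_(c <- cs) c) u g.
Proof.
move=> hb; elim: g => [|x g IH] /= hg cs u hc.
  by rewrite hcl // mulrA.
case/andP: hg => hx hg.
have -> : \prod_(b <- bs) b * \prod_(c <- cs) c * x =
   \prod_(b <- bs) b * \prod_(c <- rcons cs x) c by rewrite big_rcons mulrA.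
rewrite !IH ?all_rcons ?hx ?hc // big_rcons /=; ring.
Qed.

Lemma Lp_C bs g : all inB bs -> all inC g -> forall cs u, all inC cs ->
  Lp ((\prod_(b <- bs) b) * (\prod_(c <- cs) c)) u g =
  phi (\prod_(b <- bs) b) * Lp (\prod_(c <- cs) c) u g.
Proof.
move=> hb; elim: g => [|x g IH] /= hg cs u hc.
  by case: u => [|? ?]; rewrite ?hcl ?mulr0.
case/andP: hg => hx hg.
have -> : \prod_(b <- bs) b * \prod_(c <- cs) c * x =
   \prod_(b <- bs) b * \prod_(c <- rcons cs x) c by rewrite big_rcons mulrA.
rewrite !IH ?all_rcons ?hx ?hc // big_rcons /=; ring.
Qed.

Section Mix.
Variable N : nat.
Hypothesis Fm : forall u v, all inB u -> all inC v -> (size (u ++ v) < N)%N ->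
  F (u ++ v) = F u * F v.

Lemma Mp_mixC bs u g : all inB bs -> all inB u -> all inC g -> forall v, all inC v ->
  (size (u ++ v ++ g) <= N)%N ->
  Mp (\prod_(b <- bs) b) (u ++ v) g =
  phi (\prod_(b <- bs) b) * F u * Mp 1 v g +
  phi (\prod_(b <- bs) b) * (F (u ++ v ++ g) - F u * F (v ++ g)).
Proof.
move=> hb hu; elim: g => [|x g IH] /= hg v hv hs.
  rewrite !cats0 phi1; ring.
case/andP: hg => hx hg.
rewrite rcons_cat IH ?all_rcons ?hx //; last by rewrite cat_rcons.
rewrite (Fm hu hv); last by move: hs; rewrite !size_cat /=; lia.
have -> : \prod_(b <- bs) b * x = \prod_(b <- bs) b * \prod_(c <- [:: x]) c
  by rewrite big_seq1.
rewrite Mp_C //= ?hx // big_seq1 mul1r !cat_rcons; ring.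
Qed.

Lemma Mp_mix g : all inC g -> forall be bs u, all inB bs -> all inB u -> all inB be ->
  (size (u ++ be ++ g) <= N)%N ->
  Mp (\prod_(b <- bs) b) u (be ++ g) =
  Mp (\prod_(b <- bs) b) u be * Mp 1 [::] g +
  phi (\prod_(b <- bs) b) * (F (u ++ be ++ g) - F (u ++ be) * F g).
Proof.
move=> hg; elim=> [|x be IH] bs u hb hu hbe hs /=.
  have := @Mp_mixC bs u g hb hu hg [::] isT; rewrite /= !cats0 => ->//.
case/andP: hbe => hx hbe.
have ex : \prod_(b <- bs) b * x = \prod_(b <- rcons bs x) b by rewrite big_rcons.
rewrite ex !IH ?all_rcons ?hx //; first last.
- by move: hs; rewrite !size_cat /=; lia.
- by move: hs; rewrite !size_cat size_rcons /=; lia.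
rewrite /= (Fm hbe hg); last by move: hs; rewrite !size_cat /=; lia.
rewrite !cat_rcons; ring.
Qed.

Lemma Lp_rcons0 p u x : Lp p (rcons u x) [::] = 0.
Proof. by case: u. Qed.

Lemma Lp_mixC bs u g : all inB bs -> all inB u -> all inC g -> g != [::] ->
  forall v, all inC v ->
  (size (u ++ v ++ g) <= N)%N ->
  Lp (\prod_(b <- bs) b) (u ++ v) g =
  phi (\prod_(b <- bs) b) * F u * Lp 1 v g.
Proof.
move=> hb hu; elim: g => [|x g IH] //= hg _ v hv hs.
case/andP: hg => hx hg.
idtac.
have -> : Lp (\prod_(b <- bs) b) (rcons (u ++ v) x) g =
          phi (\prod_(b <- bs) b) * F u * Lp 1 (rcons v x) g.
  case: g IH hg hs => [|y g] IH hg hs; first by rewrite !Lp_rcons0 mulr0.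
  by rewrite rcons_cat IH ?all_rcons ?hx // cat_rcons.
rewrite (Fm hu hv); last by move: hs; rewrite !size_cat /=; lia.
have -> : \prod_(b <- bs) b * x = \prod_(b <- bs) b * \prod_(c <- [:: x]) c
  by rewrite big_seq1.
rewrite Lp_C //= ?hx // big_seq1 mul1r; ring.
Qed.

Lemma Lp_mix g : all inC g -> g != [::] -> forall be bs u, all inB bs -> all inB u -> all inB be ->
  (size (u ++ be ++ g) <= N)%N ->
  Lp (\prod_(b <- bs) b) u (be ++ g) =
  Mp (\prod_(b <- bs) b) u be * Lp 1 [::] g.
Proof.
move=> hg hg0; elim=> [|x be IH] bs u hb hu hbe hs /=.
  have := @Lp_mixC bs u g hb hu hg hg0 [::] isT; rewrite /= !cats0 => ->//.
case/andP: hbe => hx hbe.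
have ex : \prod_(b <- bs) b * x = \prod_(b <- rcons bs x) b by rewrite big_rcons.
rewrite ex !IH ?all_rcons ?hx //; first last.
- by move: hs; rewrite !size_cat /=; lia.
- by move: hs; rewrite !size_cat size_rcons /=; lia.
ring.
Qed.

End Mix.

Lemma alg_main (F0 : F [::] = 1) (Mz : forall w, w != [::] -> Mp 1 [::] w = 0)
  be g : all inB be -> all inC g -> be != [::] -> g != [::] -> Lp 1 [::] (be ++ g) = 0.
Proof.
have FmAll : forall N u v, all inB u -> all inC v -> (size (u ++ v) < N)%N ->
    F (u ++ v) = F u * F v.
  elim=> [//|N IH] u v hu hv hs.
  have [hlt|hge] := ltnP (size (u ++ v)) N; first exact: IH.
  case: u hu hs hge => [|y u] hu hs hge; first by rewrite F0 mul1r.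
  case: v hv hs hge => [|z v] hv hs hge; first by rewrite cats0 F0 mulr1.
  have hN : (size ([::] ++ (y :: u) ++ z :: v) <= N)%N by rewrite cat0s -ltnS.
  have := @Mp_mix N IH _ hv (y :: u) [::] [::] isT isT hu hN.
  rewrite big_nil !cat0s (Mz ((y :: u) ++ _)) // (Mz (y :: u)) // phi1 mul1r mul0r add0r => /eqP.
  by rewrite eq_sym subr_eq0 => /eqP.
move=> hbe hg nbe ng.
have := (@Lp_mix (size (be ++ g)) (FmAll _) _ hg ng be [::] [::] isT isT hbe (leqnn _)).
by rewrite big_nil /= => ->; rewrite Mz // mul0r.
Qed.

End Alg.

Definition incr (a : seq nat) : seq nat := if a is h :: a' then h.+1 :: a' else a.

Fixpoint lgo (i : nat) (cs : seq ptree) : seq (seq nat) :=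
  match cs with
  | [::] => [::]
  | c :: cs' => [seq i :: a | a <- leaf_addrs c] ++ lgo i.+1 cs'
  end.
Fixpoint igo (i : nat) (cs : seq ptree) : seq (seq nat) :=
  match cs with
  | [::] => [::]
  | c :: cs' => [seq i :: a | a <- internal_addrs c] ++ igo i.+1 cs'
  end.

Lemma leaf_addrs_node cs : leaf_addrs (PNode cs) = lgo 0 cs.
Proof. by []. Qed.
Lemma internal_addrs_node cs : internal_addrs (PNode cs) = [::] :: igo 0 cs.
Proof. by []. Qed.

Lemma lgoS i cs : lgo i.+1 cs = map incr (lgo i cs).
Proof.
elim: cs i => [|c cs IH] i //=.
by rewrite map_cat IH -map_comp.
Qed.
Lemma igoS i cs : igo i.+1 cs = map incr (igo i cs).
Proof.
elim: cs i => [|c cs IH] i //=.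
by rewrite map_cat IH -map_comp.
Qed.

Lemma leaf_addrs_cons c cs : leaf_addrs (PNode (c :: cs)) =
  [seq 0%N :: a | a <- leaf_addrs c] ++ map incr (leaf_addrs (PNode cs)).
Proof. by rewrite !leaf_addrs_node /= lgoS. Qed.

Lemma internal_addrs_cons c cs : behead (internal_addrs (PNode (c :: cs))) =
  [seq 0%N :: a | a <- internal_addrs c] ++ map incr (behead (internal_addrs (PNode cs))).
Proof. by rewrite !internal_addrs_node /= igoS. Qed.

Lemma nleaves_node cs : nleaves (PNode cs) = sumn [seq nleaves c | c <- cs].
Proof.
rewrite /nleaves leaf_addrs_node; elim: cs 0%N => [|c cs IH] i //=.
by rewrite size_cat size_map IH.
Qed.

Lemma ninternal_node cs : ninternal (PNode cs) = (sumn [seq ninternal c | c <- cs]).+1.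
Proof.
rewrite /ninternal internal_addrs_node /=; congr S; elim: cs 0%N => [|c cs IH] i //=.
by rewrite size_cat size_map IH.
Qed.

Lemma reduced_node cs : reduced (PNode cs) = (2 <= size cs)%N && all reduced cs.
Proof. by rewrite /=; congr andb; elim: cs => //= c cs ->. Qed.

Lemma lgo_nonnil i cs : all (fun a => a != [::]) (lgo i cs).
Proof.
elim: cs i => [|c cs IH] i //=; rewrite all_cat IH andbT.
by apply/allP => a /mapP [b _ ->].
Qed.
Lemma igo_nonnil i cs : all (fun a => a != [::]) (igo i cs).
Proof.
elim: cs i => [|c cs IH] i //=; rewrite all_cat IH andbT.
by apply/allP => a /mapP [b _ ->].
Qed.



Fixpoint AllP (P : ptree -> Prop) (cs : seq ptree) : Prop :=
  if cs is c :: cs' then P c /\ AllP P cs' else True.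

Fixpoint ptree_ind2 (P : ptree -> Prop) (HL : P PLeaf)
  (HN : forall cs, AllP P cs -> P (PNode cs)) (t : ptree) : P t :=
  match t with
  | PLeaf => HL
  | PNode cs => HN cs ((fix go (cs : seq ptree) : AllP P cs :=
       match cs with [::] => I | c :: cs' => conj (ptree_ind2 HL HN c) (go cs') end) cs)
  end.

Lemma nleaves_pos t : reduced t -> (0 < nleaves t)%N.
Proof.
elim/ptree_ind2: t => [//|cs IH].
rewrite reduced_node nleaves_node => /andP [].
case: cs IH => [|c cs] //= [IHc _] _ /andP [rc _].
by rewrite addn_gt0 IHc.
Qed.

Lemma nth_map_incr s k : nth [::] (map incr s) k = incr (nth [::] s k).
Proof. by elim: s k => [|a s IH] [|k] //=. Qed.

Lemma leaf_at_l c cs i : (0 < i <= nleaves c)%N ->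
  leaf_at (PNode (c :: cs)) i = 0%N :: leaf_at c i.
Proof.
move=> /andP [h1 h2]; rewrite /leaf_at leaf_addrs_cons nth_cat size_map.
have hi : (i.-1 < size (leaf_addrs c))%N by rewrite -/(nleaves c); lia.
by rewrite hi (nth_map [::]).
Qed.

Lemma leaf_at_r c cs i : (nleaves c < i)%N ->
  leaf_at (PNode (c :: cs)) i = incr (leaf_at (PNode cs) (i - nleaves c)).
Proof.
move=> h; rewrite /leaf_at leaf_addrs_cons nth_cat size_map -/(nleaves c).
have -> : (i.-1 < nleaves c)%N = false by lia.
by rewrite nth_map_incr; congr (incr (nth _ _ _)); lia.
Qed.

Lemma leaf_at_nonnil cs j : (0 < j <= nleaves (PNode cs))%N ->
  leaf_at (PNode cs) j != [::].
Proof.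
move=> /andP [h1 h2]; rewrite /leaf_at.
have := lgo_nonnil 0 cs; rewrite -leaf_addrs_node => /allP; apply.
by apply: mem_nth; rewrite -/(nleaves _); lia.
Qed.

Lemma lcp_incr x y : x != [::] -> y != [::] -> lcp (incr x) (incr y) = incr (lcp x y).
Proof. by case: x => [|h x] //; case: y => [|k y] //= _ _; rewrite eqSS; case: ifP. Qed.

Lemma incr_inj : injective incr.
Proof. by move=> [|h x] [|k y] //= [-> ->]. Qed.

Lemma incr_nil x : (incr x == [::]) = (x == [::]).
Proof. by case: x. Qed.

Lemma cv_l c cs v i : (0 < i < nleaves c)%N ->
  clear_view (PNode (c :: cs)) v i = (v == 0%N :: lcp (leaf_at c i) (leaf_at c i.+1)).
Proof.
move=> /andP [h1 h2]; rewrite /clear_view !leaf_at_l /= ?eqxx //; lia.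
Qed.

Lemma cv_m c cs v : (0 < nleaves c)%N -> (0 < nleaves (PNode cs))%N ->
  clear_view (PNode (c :: cs)) v (nleaves c) = (v == [::]).
Proof.
move=> h1 h2; rewrite /clear_view (leaf_at_l cs (i := nleaves c)); last by rewrite h1 leqnn.
rewrite (leaf_at_r cs (i := (nleaves c).+1)) // subSnn.
have := @leaf_at_nonnil cs 1 ltac:(by rewrite h2).
by case: (leaf_at (PNode cs) 1) => [|h x].
Qed.

Lemma cv_r c cs v i : (nleaves c < i)%N -> (i < nleaves c + nleaves (PNode cs))%N ->
  clear_view (PNode (c :: cs)) v i =
  (v == incr (lcp (leaf_at (PNode cs) (i - nleaves c)) (leaf_at (PNode cs) (i - nleaves c).+1))).
Proof.
move=> h1 h2; rewrite /clear_view !leaf_at_r; try lia.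
have e : (i.+1 - nleaves c = (i - nleaves c).+1)%N by lia.
rewrite e lcp_incr //; apply: leaf_at_nonnil; lia.
Qed.

Section TW.
Variable K : comNzRingType.
Variable A : nzRingType.
Variable phi : A -> K.

Fixpoint fw1 (fs : seq (nat * (seq A -> K))) (p : A) (w : seq A) : K :=
  match fs with
  | [::] => phi p
  | (k, f) :: fs' => f (take k.-1 (behead w)) * fw1 fs' (p * head 0 w) (drop k w)
  end.
Definition fw0 (fs : seq (nat * (seq A -> K))) (p : A) (w : seq A) : K :=
  match fs with
  | [::] => phi p
  | (k, f) :: fs' => f (take k.-1 w) * fw1 fs' p (drop k.-1 w)
  end.
Fixpoint tw (t : ptree) : seq A -> K :=
  match t with
  | PLeaf => fun _ => 1
  | PNode cs => fw0 [seq (nleaves c, tw c) | c <- cs] 1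
  end.

Lemma tw_node cs w : tw (PNode cs) w = fw0 [seq (nleaves c, tw c) | c <- cs] 1 w.
Proof. by []. Qed.

Lemma fw1_cons k f fs p x w : (0 < k)%N ->
  fw1 ((k, f) :: fs) p (x :: w) = fw0 ((k, f) :: fs) (p * x) w.
Proof. by case: k. Qed.

Lemma prod_split (P : pred nat) (f : nat -> A) nc m : (0 < nc)%N ->
  \prod_(i <- iota 1 (nc.-1 + m.+1) | P i) f i =
  \prod_(i <- iota 1 nc.-1 | P i) f i *
  ((if P nc then f nc else 1) * \prod_(i <- iota 1 m | P (nc + i)%N) f (nc + i)%N).
Proof.
move=> hn; rewrite iotaD big_cat.
have -> : (1 + nc.-1 = nc)%N by lia.
rewrite /= big_cons.
have -> : iota nc.+1 m = map (addn nc) (iota 1 m) by rewrite -iotaDl addn1.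
by rewrite big_map; case: (P nc); rewrite ?mul1r.
Qed.

Lemma eq_big_iota (P Q : pred nat) (f g : nat -> A) lo n :
  (forall i, (lo <= i < lo + n)%N -> P i = Q i) ->
  (forall i, (lo <= i < lo + n)%N -> Q i -> f i = g i) ->
  \prod_(i <- iota lo n | P i) f i = \prod_(i <- iota lo n | Q i) g i.
Proof.
move=> hPQ hfg; rewrite big_seq_cond [RHS]big_seq_cond; apply: eq_big => i.
  rewrite mem_iota; have [h|h] := boolP (lo <= i < lo + n)%N.
    by rewrite /= hPQ.
  by [].
by rewrite mem_iota => /andP [h hp]; apply: hfg => //; rewrite -hPQ.
Qed.

Lemma prod_false (P : pred nat) (f : nat -> A) lo n :
  (forall i, (lo <= i < lo + n)%N -> P i = false) ->
  \prod_(i <- iota lo n | P i) f i = 1.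
Proof.
move=> h; rewrite (@eq_big_iota P pred0 f f) ?big_pred0_eq //.
Qed.

Lemma WQ cs : (0 < size cs)%N -> all reduced cs ->
  AllP (fun c => forall a, size a = (nleaves c).-1 ->
     \prod_(v <- internal_addrs c) phi (\prod_(i <- iota 1 (size a) | clear_view c v i) a`_i.-1)
     = tw c a) cs ->
  forall p a, size a = (nleaves (PNode cs)).-1 ->
  phi (p * \prod_(i <- iota 1 (size a) | clear_view (PNode cs) [::] i) a`_i.-1) *
  \prod_(v <- behead (internal_addrs (PNode cs)))
      phi (\prod_(i <- iota 1 (size a) | clear_view (PNode cs) v i) a`_i.-1)
  = fw0 [seq (nleaves c, tw c) | c <- cs] p a.
Proof.
elim: cs => [//|c cs IH] _ /andP [rc rcs] [Hc Hcs] p a.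
have nc0 := nleaves_pos rc.
case: cs IH rcs Hcs => [|c2 cs] IH rcs Hcs.
  rewrite nleaves_node /= addn0 => ha.
  rewrite cats0 big_map.
  rewrite prod_false; last by move=> i; rewrite ha => hi; rewrite cv_l //; lia.
  rewrite take_oversize ?ha ?leqnn // -Hc // mulr1 mulrC; congr (_ * _).
  apply: eq_bigr => v _; congr (phi _).
  rewrite -ha; apply: (@eq_big_iota (fun i => clear_view _ (0%N :: v) i) (fun i => clear_view c v i)) => i hi //.
  by rewrite cv_l ?eqseq_cons ?eqxx //; lia.
move: IH => /(_ isT rcs Hcs) IH.
set cs' := c2 :: cs.
have nt0 : (0 < nleaves (PNode cs'))%N.
  by rewrite nleaves_node /= addn_gt0 nleaves_pos //; case/andP: rcs.
have -> : nleaves (PNode (c :: cs')) = (nleaves c + nleaves (PNode cs'))%N.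
  by rewrite !nleaves_node.
move=> ha.
set nc := nleaves c in ha nc0 *.
set m := (nleaves (PNode cs')).-1.
have hsa : size a = (nc.-1 + m.+1)%N by rewrite ha /m; lia.
set ac := take nc.-1 a.
set x := a`_nc.-1.
set a' := drop nc a.
have hac : size ac = nc.-1 by rewrite size_take hsa; case: ifP => //; lia.
have ha' : size a' = m by rewrite size_drop hsa; lia.
have eqa i : (1 <= i <= nc.-1)%N -> a`_i.-1 = ac`_i.-1.
  by move=> hi; rewrite nth_take //; lia.
have eqa' i : (1 <= i)%N -> a`_(nc + i).-1 = a'`_i.-1.
  by move=> hi; rewrite nth_drop; congr nth; lia.
have root : \prod_(i <- iota 1 (size a) | clear_view (PNode (c :: cs')) [::] i) a`_i.-1 =
    x * \prod_(i <- iota 1 (size a') | clear_view (PNode cs') [::] i) a'`_i.-1.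
  rewrite hsa prod_split // prod_false; last by move=> i hi; rewrite cv_l //; lia.
  rewrite cv_m // eqxx mul1r ha'; congr (_ * _).
  apply: (@eq_big_iota (fun i => clear_view _ [::] (nc + i)) (fun i => clear_view (PNode cs') [::] i) (fun i => a`_(nc + i).-1) (fun i => a'`_i.-1)) => i hi; last by move=> _; rewrite eqa' //; lia.
  rewrite cv_r; try lia.
  by rewrite addKn /clear_view !(eq_sym [::]) incr_nil.
have inner1 v : \prod_(i <- iota 1 (size a) | clear_view (PNode (c :: cs')) (0%N :: v) i) a`_i.-1 =
    \prod_(i <- iota 1 (size ac) | clear_view c v i) ac`_i.-1.
  rewrite hsa prod_split // cv_m // [X in _ * (_ * X)]prod_false; last first.
    move=> i hi; rewrite cv_r; try lia.
    by case: (lcp _ _) => [|h y].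
  rewrite /= !mulr1 hac.
  apply: (@eq_big_iota (fun i => clear_view _ (0%N :: v) i) (fun i => clear_view c v i) (fun i => a`_i.-1) (fun i => ac`_i.-1)) => i hi; last by move=> _; rewrite eqa //; lia.
  by rewrite cv_l ?eqseq_cons ?eqxx //; lia.
have inner2 v : v != [::] ->
    \prod_(i <- iota 1 (size a) | clear_view (PNode (c :: cs')) (incr v) i) a`_i.-1 =
    \prod_(i <- iota 1 (size a') | clear_view (PNode cs') v i) a'`_i.-1.
  move=> hv; rewrite hsa prod_split // cv_m // incr_nil (negbTE hv) prod_false; last first.
    by move=> i hi; rewrite cv_l; try lia; case: v hv.
  rewrite !mul1r ha'.
  apply: (@eq_big_iota (fun i => clear_view _ (incr v) (nc + i)) (fun i => clear_view (PNode cs') v i) (fun i => a`_(nc + i).-1) (fun i => a'`_i.-1)) => i hi; last by move=> _; rewrite eqa' //; lia.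
  by rewrite cv_r; try lia; rewrite addKn (inj_eq incr_inj).
rewrite internal_addrs_cons big_cat !big_map root.
rewrite (eq_bigr _ (fun v _ => congr1 phi (inner1 v))) Hc //.
rewrite (eq_big_seq _ (fun v hv => congr1 phi (inner2 v _))); last first.
  have := igo_nonnil 0 cs'; rewrite -[igo 0 cs']/(behead (internal_addrs (PNode cs'))).
  by move/allP; apply.
have hd : drop nc.-1 a = x :: a' by rewrite (drop_nth 0) ?prednK // hsa; lia.
have step : fw0 [seq (nleaves c0, tw c0) | c0 <- c :: cs'] p a =
    tw c ac * fw0 [seq (nleaves c0, tw c0) | c0 <- cs'] (p * x) a'.
  rewrite /= -/ac hd; case/andP: rcs => /nleaves_pos.
  by case: (nleaves c2).
rewrite step -IH; last by rewrite ha' /m.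
rewrite [p * (x * _)]mulrA; exact: mulrCA.
Qed.

End TW.

Lemma size_rpt_table m : size (rpt_table m) = m.+1.
Proof. by elim: m => //= m IH; rewrite size_rcons IH. Qed.

Lemma nth_rpt_table m k : (k <= m)%N -> nth [::] (rpt_table m) k = rpt k.
Proof.
elim: m => [|m IH] hk; first by case: k hk.
rewrite leq_eqVlt in hk; case/orP: hk => [/eqP ->//|hk].
by rewrite /= nth_rcons (size_rpt_table m) hk IH.
Qed.

Lemma rpt1 : rpt 1 = [:: PLeaf].
Proof. by []. Qed.

Lemma rptSS m : rpt m.+2 =
  [seq PNode cs | cs <- forests (rpt_table m.+1) m.+2 m.+2 & (2 <= size cs)%N].
Proof.
by rewrite /rpt [rpt_table m.+2]/= nth_rcons (size_rpt_table m.+1) ltnn eqxx.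
Qed.

Lemma forests0 T f : forests T f 0 = [:: [::]].
Proof. by case: f. Qed.

Lemma all_flatten (T : Type) (P : pred T) (ss : seq (seq T)) :
  all P (flatten ss) = all (all P) ss.
Proof. by elim: ss => //= s ss IH; rewrite all_cat IH. Qed.

Lemma all_allpairs_gen (S T R : Type) (P : pred R) (PS : pred S) (f : S -> T -> R)
  (s : seq S) (t : S -> seq T) :
  all PS s -> (forall x, PS x -> all (fun y => P (f x y)) (t x)) ->
  all P [seq f x y | x <- s, y <- t x].
Proof.
elim: s => //= x s IH /andP [hx hs] h; rewrite all_cat IH // andbT all_map.
exact: h.
Qed.

Lemma forests_all T f s :
  (forall k, (0 < k <= s)%N -> all (fun t => reduced t && (nleaves t == k)) (nth [::] T k)) ->
  all (fun cs => all reduced cs && (sumn [seq nleaves c | c <- cs] == s)) (forests T f s).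
Proof.
elim: f s => [|f IH] s hT.
  by case: s hT.
rewrite /=; case: eqP => [->//|/eqP s0].
rewrite all_flatten all_map; apply/allP => k; rewrite mem_iota => /andP [k1 k2] /=.
apply: (all_allpairs_gen (PS := fun t => reduced t && (nleaves t == k))).
  by apply: hT; rewrite k1; lia.
move=> t /andP [rt /eqP nt].
have : all (fun cs => all reduced cs && (sumn [seq nleaves c | c <- cs] == (s - k)%N))
   (forests T f (s - k)).
  by apply: IH => k' hk'; apply: hT; lia.
apply: sub_all => r /andP [rr /eqP sr] /=.
by rewrite rt rr sr nt /=; apply/eqP; lia.
Qed.

Lemma rpt_all k : (0 < k)%N -> all (fun t => reduced t && (nleaves t == k)) (rpt k).
Proof.
elim/ltn_ind: k => k IH k0.
case: k IH k0 => [//|[|m]] IH _; first by [].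
rewrite rptSS all_map all_filter.
have hf : all (fun cs => all reduced cs && (sumn [seq nleaves c | c <- cs] == m.+2))
    (forests (rpt_table m.+1) m.+2 m.+2).
  apply: forests_all => k' /andP [k1 k2]; rewrite leq_eqVlt in k2; case/orP: k2 => [/eqP ->|k2].
    by rewrite nth_default // size_rpt_table.
  by rewrite nth_rpt_table ?IH //; lia.
apply: sub_all hf => cs /andP [rcs /eqP ns]; apply/implyP => h2 /=.
change (reduced (PNode cs) && (nleaves (PNode cs) == m.+2)).
by rewrite reduced_node h2 rcs nleaves_node ns eqxx.
Qed.

Lemma rpt_node m : all (fun t => if t is PLeaf then false else true) (rpt m.+2).
Proof. by rewrite rptSS; elim: (filter _ _). Qed.

Section Sum.
Variable K : comNzRingType.
Variable A : nzRingType.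
Variable phi : A -> K.

Lemma Wtree t : reduced t -> forall a, size a = (nleaves t).-1 ->
  \prod_(v <- internal_addrs t) phi (\prod_(i <- iota 1 (size a) | clear_view t v i) a`_i.-1)
  = tw phi t a.
Proof.
elim/ptree_ind2: t => [_ a _|cs IH]; first by rewrite big_nil.
rewrite reduced_node => /andP [h2 rcs] a ha.
rewrite internal_addrs_node big_cons -[X in phi X]mul1r.
have := @WQ K A phi cs ltac:(lia) rcs.
have H : AllP (fun c => forall a, size a = (nleaves c).-1 ->
     \prod_(v <- internal_addrs c) phi (\prod_(i <- iota 1 (size a) | clear_view c v i) a`_i.-1)
     = tw phi c a) cs.
  elim: cs IH rcs {h2 ha} => [//|c cs IHcs] /= [Hc Hcs] /andP [rc rcs].
  by split; [exact: Hc | exact: IHcs].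
by move=> /(_ H 1 a ha).
Qed.

Definition sgn t : K := (-1) ^+ ninternal t.
Definition sgnf cs : K := \prod_(c <- cs) sgn c.
Definition Ft (w : seq A) : K := \sum_(t <- rpt (size w).+1) sgn t * tw phi t w.
Definition FW0 cs p w := fw0 phi [seq (nleaves c, tw phi c) | c <- cs] p w.
Definition isLeaf t := if t is PLeaf then true else false.

Lemma eq_big_all (I : Type) (P : pred I) r (F1 F2 : I -> K) :
  all P r -> (forall x, P x -> F1 x = F2 x) -> \sum_(x <- r) F1 x = \sum_(x <- r) F2 x.
Proof.
elim: r => [|x r IH] /=; first by rewrite !big_nil.
by case/andP=> hx hr h; rewrite !big_cons h // IH.
Qed.

Lemma sum_forests_unfold T f s (G : seq ptree -> K) : (0 < s)%N ->
  \sum_(cs <- forests T f.+1 s) G cs =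
  \sum_(j <- iota 0 s.-1) \sum_(t <- nth [::] T j.+1) \sum_(r <- forests T f (s - j.+1)) G (t :: r)
  + \sum_(t <- nth [::] T s) G [:: t].
Proof.
case: s => // s _.
have -> : forests T f.+1 s.+1 = flatten [seq [seq t :: r | t <- nth [::] T k,
     r <- forests T f (s.+1 - k)] | k <- iota 1 s.+1] by [].
have -> : iota 1 s.+1 = iota 1 s ++ [:: s.+1] by rewrite -(iotaD 1 s 1) addn1.
rewrite big_flatten big_map big_cat big_seq1 iota1S big_map /=.
congr (_ + _).
  apply: eq_bigr => j _; rewrite big_allpairs_dep.
  by [].
rewrite big_allpairs_dep subnn forests0; apply: eq_bigr => t _.
by rewrite big_seq1.
Qed.

Lemma leaf_sum s w : (0 < s)%N -> size w = s.-1 ->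
  \sum_(t <- rpt s) (if isLeaf t then sgn t * tw phi t w else 0) = if w is [::] then 1 else 0.
Proof.
case: s => [//|[|m]] _ hw.
  by rewrite rpt1 big_seq1 /= /sgn /ninternal /= expr0 mul1r; case: w hw.
rewrite (eq_big_all (rpt_node m) (F2 := fun _ => 0)); last by case.
by rewrite big1 //; case: w hw.
Qed.

Lemma sgnf_cons t r : sgnf (t :: r) = sgn t * sgnf r.
Proof. by rewrite /sgnf big_cons. Qed.

Lemma FW0_cons t r p w : (0 < nleaves t)%N -> (nleaves t <= size w)%N ->
  (0 < size r)%N -> all (fun c => 0 < nleaves c)%N r ->
  FW0 (t :: r) p w = tw phi t (take (nleaves t).-1 w) *
     FW0 r (p * w`_(nleaves t).-1) (drop (nleaves t) w).
Proof.
move=> h1 h2 h3 h4; rewrite /FW0 /= (drop_nth 0); last by rewrite prednK.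
case: r h3 h4 => // t' r _ /andP [ht' _] /=; rewrite prednK //.
by case: (nleaves t') ht'.
Qed.

Lemma FM s : forall T f p w, (0 < s <= f)%N -> size w = s.-1 ->
  (forall k, (0 < k < s)%N -> nth [::] T k = rpt k) ->
  all (fun t => nleaves t == s) (nth [::] T s) ->
  (\sum_(cs <- forests T f s) sgnf cs * FW0 cs p w =
   (\sum_(t <- nth [::] T s) sgn t * tw phi t w) * phi p +
   \sum_(j <- iota 0 s.-1) Ft (take j w) * Mp phi Ft (p * w`_j) [::] (drop j.+1 w)) /\
  (\sum_(cs <- forests T f s) (if isLeaf (last PLeaf cs) then sgnf cs * FW0 cs p w else 0) =
   (\sum_(t <- nth [::] T s) (if isLeaf t then sgn t * tw phi t w else 0)) * phi p +
   \sum_(j <- iota 0 s.-1) Ft (take j w) * Lp phi Ft (p * w`_j) [::] (drop j.+1 w)).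
Proof.
elim/ltn_ind: s => s IH T f p w /andP [s0 sf] hw hT hTs.
case: f sf => [|f] sf; first lia.
have last_part (G : seq ptree -> K) (H : ptree -> K) :
    (forall t, nleaves t = s -> G [:: t] = H t * phi p) ->
    \sum_(t <- nth [::] T s) G [:: t] = (\sum_(t <- nth [::] T s) H t) * phi p.
  move=> hG; rewrite big_distrl /=; apply: (eq_big_all hTs) => t /eqP; exact: hG.
have proper j : (j < s.-1)%N ->
  let s' := (s - j.+1)%N in
  let w'' := drop j.+1 w in
  let x := w`_j in
  (forall r, (0 < size r)%N -> all (fun c => 0 < nleaves c)%N r ->
     forall t, nleaves t = j.+1 ->
     sgnf (t :: r) * FW0 (t :: r) p w = sgn t * tw phi t (take j w) * (sgnf r * FW0 r (p * x) w''))
  /\ all (fun r => (0 < size r)%N && all (fun c => 0 < nleaves c)%N r) (forests T f s')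
  /\ (0 < s' <= f)%N /\ size w'' = s'.-1 /\ (s' < s)%N
  /\ (forall k, (0 < k < s')%N -> nth [::] T k = rpt k)
  /\ all (fun t => nleaves t == s') (nth [::] T s')
  /\ nth [::] T j.+1 = rpt j.+1
  /\ all (fun t => nleaves t == j.+1) (rpt j.+1)
  /\ size (take j w) = j /\ nth [::] T s' = rpt s'.
  move=> hj s' w'' x.
  have hs' : (0 < s' < s)%N by rewrite /s'; lia.
  have hTs' : nth [::] T s' = rpt s' by apply: hT; lia.
  have ra' := rpt_all (k := s') ltac:(lia).
  split.
    move=> r hr hr' t ht; rewrite sgnf_cons FW0_cons ?ht //; try lia.
    by rewrite /= -/x -/w'' /=; ring.
  split.
    have hf : all (fun cs => all reduced cs && (sumn [seq nleaves c | c <- cs] == s'))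
        (forests T f s').
      apply: forests_all => k hk; rewrite hT; last by lia.
      by apply: rpt_all; lia.
    apply: sub_all hf => r /andP [rr /eqP sr].
    apply/andP; split; first by case: r rr sr => //= _; lia.
    by apply: sub_all rr => c /nleaves_pos.
  split; first by rewrite /s'; lia.
  split; first by rewrite /w'' size_drop hw /s'; lia.
  split; first by lia.
  split; first by move=> k hk; apply: hT; lia.
  split; first by rewrite hTs'; apply: sub_all ra' => t /andP [].
  split; first by apply: hT; lia.
  split; first by apply: sub_all (rpt_all (k := j.+1) isT) => t /andP [].
  split; last by [].
  by rewrite size_take hw; case: ifP => //; lia.
have Mfrom s' q w'' : (0 < s')%N -> size w'' = s'.-1 ->
  (\sum_(t <- rpt s') sgn t * tw phi t w'') * phi q +
  \sum_(j <- iota 0 s'.-1) Ft (take j w'') * Mp phi Ft (q * w''`_j) [::] (drop j.+1 w'')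
  = Mp phi Ft q [::] w''.
  move=> h0 h; rewrite Mp_unroll /= h; congr (_ + _); rewrite mulrC /Ft h prednK //.
have Lfrom s' q w'' : (0 < s')%N -> size w'' = s'.-1 ->
  (\sum_(t <- rpt s') (if isLeaf t then sgn t * tw phi t w'' else 0)) * phi q +
  \sum_(j <- iota 0 s'.-1) Ft (take j w'') * Lp phi Ft (q * w''`_j) [::] (drop j.+1 w'')
  = Lp phi Ft q [::] w''.
  move=> h0 h; rewrite Lp_unroll /= leaf_sum // h.
  by congr (_ + _); case: (w''); rewrite ?mul1r ?mul0r.
rewrite !sum_forests_unfold //; split.
  rewrite addrC; congr (_ + _).
    apply: (last_part (fun cs => sgnf cs * FW0 cs p w) (fun t => sgn t * tw phi t w)) => t ht.
    rewrite /sgnf /FW0 big_seq1 /= take_oversize ?hw ?ht //; ring.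
  rewrite big_seq_cond [RHS]big_seq_cond; apply: eq_bigr => j; rewrite mem_iota andbT => /andP [_ hj].
  have [hG [hall [hsf [hw'' [hlt [hT' [hTs' [hTj [hrj [hsz hTe]]]]]]]]]] := proper j hj.
  rewrite hTj [Ft (take j w)]/Ft hsz big_distrl /=; apply: (eq_big_all hrj) => t /eqP ht.
  rewrite (eq_big_all hall (F2 := fun r => sgn t * tw phi t (take j w) *
      (sgnf r * FW0 r (p * w`_j) (drop j.+1 w)))); last first.
    by move=> r /andP [hr1 hr2]; apply: hG.
  rewrite -big_distrr /= -!mulrA; congr (_ * (_ * _)).
  rewrite (IH _ hlt T f _ _ hsf hw'' hT' hTs').1.
  by rewrite hTe; apply: Mfrom => //; lia.
rewrite addrC; congr (_ + _).
  apply: (last_part (fun cs => if isLeaf (last PLeaf cs) then sgnf cs * FW0 cs p w else 0)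
     (fun t => if isLeaf t then sgn t * tw phi t w else 0)) => t ht.
  rewrite /sgnf /FW0 big_seq1 /= take_oversize ?hw ?ht //.
  by case: (isLeaf t); rewrite ?mul0r //; ring.
rewrite big_seq_cond [RHS]big_seq_cond; apply: eq_bigr => j; rewrite mem_iota andbT => /andP [_ hj].
have [hG [hall [hsf [hw'' [hlt [hT' [hTs' [hTj [hrj [hsz hTe]]]]]]]]]] := proper j hj.
rewrite hTj [Ft (take j w)]/Ft hsz big_distrl /=; apply: (eq_big_all hrj) => t /eqP ht.
rewrite (eq_big_all hall (F2 := fun r => sgn t * tw phi t (take j w) *
    (if isLeaf (last PLeaf r) then sgnf r * FW0 r (p * w`_j) (drop j.+1 w) else 0))); last first.
  move=> r /andP [hr1 hr2].
  have -> : last t r = last PLeaf r by case: r hr1 {hr2}.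
  by case: ifP => _; rewrite ?mulr0 // hG.
rewrite -big_distrr /= -!mulrA; congr (_ * (_ * _)).
rewrite (IH _ hlt T f _ _ hsf hw'' hT' hTs').2.
by rewrite hTe; apply: Lfrom => //; lia.
Qed.

Lemma Ft0 : Ft [::] = 1.
Proof. by rewrite /Ft /= rpt1 big_seq1 /sgn /ninternal /= expr0 mul1r. Qed.

Lemma sgn_node cs : sgn (PNode cs) = - sgnf cs.
Proof.
rewrite /sgn ninternal_node exprS mulN1r; congr (- _).
rewrite /sgnf; elim: cs => [|c cs IH] /=; first by rewrite big_nil.
by rewrite big_cons exprD IH.
Qed.

Lemma prime_node cs :
  prime_tree (PNode cs) = (1 < nleaves (PNode cs))%N && isLeaf (last PLeaf cs).
Proof. by []. Qed.

Lemma sign_node cs : (-1) ^+ (ninternal (PNode cs)).-1 = sgnf cs.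
Proof. by rewrite -[sgnf cs]opprK -sgn_node /sgn exprS mulN1r opprK. Qed.

Lemma forests_size2 T f s : (0 < s)%N -> nth [::] T s = [::] ->
  (forall k, (0 < k < s)%N -> all (fun t => reduced t && (nleaves t == k)) (nth [::] T k)) ->
  all (fun cs => 1 < size cs)%N (forests T f s).
Proof.
case: f => [|f] s0 hs hT; first by case: s s0 {hs hT}.
rewrite /=; case: eqP => [s00|_]; first by move: s0; rewrite s00.
rewrite all_flatten all_map; apply/allP => k; rewrite mem_iota => /andP [k1 k2] /=.
have [->|ks] := eqVneq k s; first by rewrite hs.
have kl : (k < s)%N by rewrite ltn_neqAle ks.
apply: (all_allpairs_gen (PS := predT)); first by rewrite all_predT.
move=> t _.
have : all (fun cs => all reduced cs && (sumn [seq nleaves c | c <- cs] == (s - k)%N))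
   (forests T f (s - k)).
  by apply: forests_all => k' hk'; apply: hT; lia.
apply: sub_all => r /andP [_ /eqP sr] /=.
by case: r sr => [|? ?] //= h; lia.
Qed.

Lemma top_all m :
  all (fun cs => (1 < size cs)%N && (sumn [seq nleaves c | c <- cs] == m.+2))
    (forests (rpt_table m.+1) m.+2 m.+2).
Proof.
have hT k : (0 < k <= m.+1)%N -> all (fun t => reduced t && (nleaves t == k))
     (nth [::] (rpt_table m.+1) k).
  by move=> /andP [k1 k2]; rewrite nth_rpt_table // rpt_all.
have hs : nth [::] (rpt_table m.+1) m.+2 = [::] by rewrite nth_default // size_rpt_table.
have h1 := @forests_size2 (rpt_table m.+1) m.+2 m.+2 isT hs
   ltac:(by move=> k /andP [k1 k2]; apply: hT; lia).
have h2 := @forests_all (rpt_table m.+1) m.+2 m.+2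
   ltac:(move=> k /andP [k1 k2]; rewrite leq_eqVlt in k2; case/orP: k2 => [/eqP ->|k2];
     [by rewrite hs | by apply: hT; lia]).
elim: (forests _ _ _) h1 h2 => //= cs l IH /andP [a1 a2] /andP [/andP [_ b1] b2].
by rewrite a1 b1 IH.
Qed.

Lemma FM_top m p w : size w = m.+1 ->
  (\sum_(cs <- forests (rpt_table m.+1) m.+2 m.+2) sgnf cs * FW0 cs p w =
   \sum_(j <- iota 0 m.+1) Ft (take j w) * Mp phi Ft (p * w`_j) [::] (drop j.+1 w)) /\
  (\sum_(cs <- forests (rpt_table m.+1) m.+2 m.+2)
      (if isLeaf (last PLeaf cs) then sgnf cs * FW0 cs p w else 0) =
   \sum_(j <- iota 0 m.+1) Ft (take j w) * Lp phi Ft (p * w`_j) [::] (drop j.+1 w)).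
Proof.
move=> hw.
have hs : nth [::] (rpt_table m.+1) m.+2 = [::] by rewrite nth_default // size_rpt_table.
have := @FM m.+2 (rpt_table m.+1) m.+2 p w (leqnn _) hw
  ltac:(by move=> k hk; rewrite nth_rpt_table //; lia) ltac:(by rewrite hs).
by rewrite hs !big_nil !mul0r !add0r.
Qed.

Lemma Mz (phi1 : phi 1 = 1) w : w != [::] -> Mp phi Ft 1 [::] w = 0.
Proof.
move=> wn; have [m hw] : exists m, size w = m.+1 by case: w wn => // x w0 _; exists (size w0).
have e : Ft w = - (Mp phi Ft 1 [::] w - Ft w).
  rewrite {1}/Ft hw rptSS big_map big_filter big_mkcond /=.
  rewrite (eq_big_all (top_all m) (F2 := fun cs => - (sgnf cs * FW0 cs 1 w))); last first.
    by move=> cs /andP [-> _]; rewrite sgn_node mulNr.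
  rewrite sumrN (FM_top 1 hw).1; congr (- _).
  by rewrite Mp_unroll phi1 mul1r hw /= addrC addKr.
by move: e; rewrite opprB => /eqP; rewrite eq_sym subr_eq addrC -subr_eq subrr eq_sym => /eqP.
Qed.

End Sum.

Section Kappa.
Variable K : comNzRingType.
Variable A : algType K.
Variable phi : A -> K.

Lemma kappa_Lp w : w != [::] -> kappa phi w = Lp phi (Ft phi) 1 [::] w.
Proof.
move=> wn; have [m hw] : exists m, size w = m.+1 by case: w wn => // x w0 _; exists (size w0).
rewrite /kappa /PST big_filter big_mkcond.
rewrite (eq_big_all (rpt_all (k := (size w).+1) isT)
  (F2 := fun t => if prime_tree t then (-1) ^+ (ninternal t).-1 * tw phi t w else 0)); last first.
  move=> t /andP [rt /eqP nt]; rewrite rt /weight nt eqxx /=.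
  case: ifP => // _; congr (_ * _); apply: Wtree => //; by rewrite nt.
rewrite hw rptSS big_map big_filter big_mkcond /=.
rewrite (eq_big_all (top_all m) (F2 := fun cs =>
   if isLeaf (last PLeaf cs) then sgnf K cs * FW0 phi cs 1 w else 0)); last first.
  move=> cs /andP [h2 /eqP ns].
  rewrite h2 prime_node nleaves_node ns sign_node.
  by case: (isLeaf _).
apply: etrans (FM_top phi 1 hw).2 _.
rewrite Lp_unroll hw /=.
by move: wn; case: w {hw} => // ? ? _; rewrite add0r.
Qed.

End Kappa.
Theorem mainTheorem6 (R : realType) (A : algType R[i])
    (phi : {linear A -> R[i]^o}) (phi1 : phi 1 = 1)
    (B C : pred A) (hBC : cluster phi B C)
    (bs cs : seq A) :
  (0 < size bs)%N -> (0 < size cs)%N ->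
  all [in B] bs -> all [in C] cs ->
  kappa phi (bs ++ cs) = 0.
Proof.
move=> hb hc hB hC.
rewrite kappa_Lp; last by case: bs hb {hB}.
apply: (@alg_main _ _ phi (Ft phi) [in B] [in C]) => //.
- exact: Ft0.
- by move=> w; apply: Mz.
- by case: bs hb {hB}.
- by case: cs hc {hC}.
Qed.
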